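(* For every integer $d\ge 1$ there is a finite graph which is not a $d$-sphere graph; equivalently, there is a finite graph of sphere dimension greater than $d$.
   Context: Let $\mathbb{D}^d=\{x\in\mathbb{R}^{d+1}: |x|\le 1\}$ and $\mathcal{H}_d=\{\mathbb{D}^d\cap H: H \text{ a hyperplane of } \mathbb{R}^{d+1}\text{ meeting the interior of }\mathbb{D}^d\}$. A $d$-sphere graph is an intersection graph of a subfamily of $\mathcal{H}_d$. For $d\ge 2$ these are exactly the intersection graphs of families of spheres in $\mathbb{R}^d$; for $d=1$ they are the circle graphs. The sphere dimension of a graph is the least $d$ such that it is a $d$-sphere graph. *)

(* Defs.v *)
From HB Require Import structures.
From mathcomp Require Import all_boot all_order all_algebra.
From Stdlib Require Import Reals.
From mathcomp Require Import Rstruct.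
Set Implicit Arguments. Unset Strict Implicit. Unset Printing Implicit Defensive.
Import Order.TTheory GRing.Theory Num.Theory.
Local Open Scope ring_scope.

Definition point (d : nat) := 'I_d.+1 -> Rdefinitions.R.

Definition dotp (d : nat) (a x : point d) : Rdefinitions.R := \sum_(i < d.+1) a i * x i.

Definition in_disk (d : nat) (x : point d) : Prop := dotp x x <= 1.

Definition in_Hd (d : nat) (S : point d -> Prop) : Prop :=
  exists (a : point d) (b : Rdefinitions.R),
    (exists i, a i <> 0) /\
    (exists x : point d, dotp x x < 1 /\ dotp a x = b) /\
    (forall x : point d, S x <-> (in_disk x /\ dotp a x = b)).

(* A finite simple graph (V, e) is a d-sphere graph: it is the intersection
   graph of a subfamily of H_d, i.e. there is an injective assignment of
   members of H_d to vertices such that distinct vertices are adjacent iff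
   their sets intersect. *)
Definition sphere_graph (d : nat) (V : finType) (e : rel V) : Prop :=
  exists f : V -> (point d -> Prop),
    (forall v, in_Hd (f v)) /\ injective f /\
    (forall u v, u != v -> (e u v <-> exists x, f u x /\ f v x)).

(* Main.v *)
Require Import Defs.
From Stdlib Require Import Reals.
From mathcomp Require Import all_boot all_order all_algebra.
From mathcomp Require Import Rstruct.
From mathcomp Require Import ring lra.
Set Implicit Arguments. Unset Strict Implicit. Unset Printing Implicit Defensive.
Import Order.TTheory GRing.Theory Num.Theory.
Local Open Scope ring_scope.

Notation RR := Rdefinitions.R.
Delimit Scope ring_scope with RG.

Definition lin2 d (s : RR) (x : point d) (t : RR) (y : point d) : point d :=
  fun i => s * x i + t * y i.
Arguments lin2 {d} s%_ring_scope x t%_ring_scope y.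

Lemma dotpC d (x y : point d) : dotp x y = dotp y x.
Proof. by rewrite /dotp; apply: eq_bigr => i _; rewrite mulrC. Qed.

Lemma dotp_lin2r d (a : point d) s x t y :
  dotp a (lin2 s x t y) = s * dotp a x + t * dotp a y.
Proof.
rewrite /dotp /lin2 !mulr_sumr -big_split /=; apply: eq_bigr => i _; ring.
Qed.

Lemma dotp_lin2l d (a : point d) s x t y :
  dotp (lin2 s x t y) a = s * dotp x a + t * dotp y a.
Proof. by rewrite dotpC dotp_lin2r (dotpC a x) (dotpC a y). Qed.

Lemma dotp_lin2 d s (x : point d) t y :
  dotp (lin2 s x t y) (lin2 s x t y) =
  s^+2 * dotp x x + 2 * s * t * dotp x y + t^+2 * dotp y y.
Proof.
rewrite dotp_lin2l !dotp_lin2r (dotpC y x); ring.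
Qed.

Lemma dotp_ge0 d (x : point d) : 0 <= dotp x x.
Proof. by apply: sumr_ge0 => i _; rewrite -expr2 sqr_ge0. Qed.

Lemma dotp_eq0 d (x : point d) : dotp x x = 0 -> forall i, x i = 0.
Proof.
move=> h i.
have hp : forall j : 'I_d.+1, true -> 0 <= x j * x j by move=> j _; rewrite -expr2 sqr_ge0.
have := psumr_eq0P hp h (i:=i) isT.
by move=> /eqP; rewrite mulf_eq0 orbb => /eqP.
Qed.

Lemma dotp0 d (x y : point d) : (forall i, x i = 0) -> dotp x y = 0.
Proof. by move=> h; rewrite /dotp big1 // => i _; rewrite h mul0r. Qed.

Definition Pf d (a : point d) b (c : point d) b' :=
  b^+2 * dotp c c - 2*b*b'*dotp a c + b'^+2 * dotp a a -
  (dotp a a * dotp c c - dotp a c ^+ 2).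

Lemma inter_iff d (a c : point d) b b' :
  (exists i, c i <> 0) -> (exists x, dotp x x < 1 /\ dotp c x = b') ->
  ((exists x, in_disk x /\ dotp a x = b /\ dotp c x = b') <-> Pf a b c b' <= 0).
Proof.
move=> [i0 hi0] [x0 [hx0 hcx0]].
set aa := dotp a a; set cc := dotp c c; set ac := dotp a c.
have ccpos : 0 < cc.
  rewrite lt_def dotp_ge0 andbT; apply/eqP => /dotp_eq0 h; exact: hi0 (h i0).
pose q := lin2 cc a (- ac) c.
have qq : dotp q q = cc * (aa * cc - ac ^+ 2).
  rewrite /q dotp_lin2 -/aa -/cc -/ac; ring.
have Dge0 : 0 <= aa * cc - ac ^+ 2.
  by rewrite -(pmulr_rge0 _ ccpos) -qq dotp_ge0.
have deg : aa * cc - ac ^+ 2 = 0 -> forall y, dotp q y = cc * dotp a y - ac * dotp c y.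
  by move=> _ y; rewrite /q dotp_lin2l mulNr.
have deg0 : aa * cc - ac ^+ 2 = 0 -> forall y, cc * dotp a y = ac * dotp c y.
  move=> h y; have hq : forall i, q i = 0 by apply: dotp_eq0; rewrite qq h mulr0.
  by apply/eqP; rewrite -subr_eq0 -(deg h y) dotp0.
rewrite /Pf -/aa -/cc -/ac.
set D := aa * cc - ac ^+ 2.
set al := cc * b - ac * b'; set be := aa * b' - ac * b.
set Q := b ^+ 2 * cc - 2 * b * b' * ac + b' ^+ 2 * aa.
have hQ : cc * Q = (cc*b - ac*b')^+2 + b'^+2 * D by rewrite /Q /D; ring.
have Dgt0 : D != 0 -> 0 < D by move=> h; rewrite lt_def h Dge0.
have ccn0 : cc != 0 by rewrite gt_eqF.
split.
- move=> [x [hx [hax hcx]]]; rewrite /in_disk in hx.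
  have [D0|Dn0] := eqVneq D 0.
    have e1 := deg0 D0 x; rewrite hax hcx in e1.
    rewrite e1 subrr expr0n /= D0 mulr0 addr0 in hQ.
    have : Q = 0 by move/eqP: hQ; rewrite mulf_eq0 (negbTE ccn0) => /eqP.
    by move=> ->; rewrite D0 subr0.
  pose p := lin2 al a be c.
  pose u := lin2 D x (-1) p.
  have hu : dotp u u = D * (D * dotp x x - Q).
    rewrite /u dotp_lin2 /p dotp_lin2r dotp_lin2 (dotpC x a) (dotpC x c) hax hcx.
    rewrite -/aa -/cc -/ac /al /be /Q /D; ring.
  have h1 : 0 <= D * dotp x x - Q.
    by rewrite -(pmulr_rge0 _ (Dgt0 Dn0)) -hu dotp_ge0.
  have h2 : D * dotp x x <= D * 1 by rewrite ler_wpM2l.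
  lra.
- move=> hP.
  have [D0|Dn0] := eqVneq D 0.
    rewrite D0 subr0 in hP.
    rewrite D0 mulr0 addr0 in hQ.
    have hsq : (cc*b - ac*b')^+2 = 0.
      apply/eqP; rewrite eq_le sqr_ge0 andbT -hQ.
      by rewrite pmulr_rle0.
    move/eqP: hsq; rewrite expf_eq0 /= subr_eq0 => /eqP e1.
    exists x0; split; first by rewrite /in_disk ltW.
    split => //.
    apply: (mulfI ccn0); rewrite deg0 // hcx0 e1 //.
  pose x := lin2 (al / D) a (be / D) c.
  exists x; split; last split.
  + rewrite /in_disk.
    have -> : dotp x x = Q / D.
      rewrite /x dotp_lin2 -/aa -/cc -/ac /Q /al /be.
      move: Dn0; rewrite /D => Dn0; field => //.
    by rewrite ler_pdivrMr ?Dgt0 // mul1r -subr_le0.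
  + rewrite /x dotp_lin2r -/aa -/ac /al /be.
    move: Dn0; rewrite /D => Dn0; field => //.
  + rewrite /x dotp_lin2r -/cc (dotpC c a) -/ac /al /be.
    move: Dn0; rewrite /D => Dn0; field => //.
Qed.

Notation TT d := (((bool + 'I_d.+1) + 'I_d.+1 * 'I_d.+1))%type.
Section Lin.
Variable d : nat.

Definition phi (a : point d) (b : RR) (t : TT d) : RR :=
  match t with
  | inl (inl true) => (b ^+ 2)%RG
  | inl (inl false) => dotp a a
  | inl (inr i) => (- 2 * b * a i)%RG
  | inr (i, j) => (a i * a j)%RG
  end.
Definition psi (c : point d) (b' : RR) (t : TT d) : RR :=
  match t with
  | inl (inl true) => dotp c c
  | inl (inl false) => (b' ^+ 2 - dotp c c)%RG
  | inl (inr i) => (b' * c i)%RG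
  | inr (i, j) => (c i * c j)%RG
  end.

Lemma Pf_lin a b c b' : Pf a b c b' = \sum_(t : TT d) phi a b t * psi c b' t.
Proof.
rewrite big_sumType big_sumType big_bool /=.
have -> : \sum_(i : 'I_d.+1) (- 2 * b * a i) * (b' * c i) = - 2 * b * b' * dotp a c.
  rewrite /dotp mulr_sumr; apply: eq_bigr => i _; ring.
have -> : \sum_(p : 'I_d.+1 * 'I_d.+1) phi a b (inr p) * psi c b' (inr p)
   = \sum_(p : 'I_d.+1 * 'I_d.+1) (a p.1 * c p.1) * (a p.2 * c p.2).
  apply: eq_bigr => -[i j] _; rewrite /phi /psi /=; ring.
rewrite -(pair_bigA _ (fun i j => (a i * c i) * (a j * c j))) /=.
have -> : \sum_(i : 'I_d.+1) \sum_(j : 'I_d.+1) a i * c i * (a j * c j) = dotp a c ^+ 2.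
  by rewrite expr2 /dotp big_distrlr.
rewrite /Pf /phi /psi /=; ring.
Qed.
End Lin.

Definition kk d := #|{: TT d}|.+1.
Definition VV d := ('I_(kk d) + {set 'I_(kk d)})%type.
Definition ee d : rel (VV d) := fun u v =>
  match u, v with
  | inl i, inr Sx => i \in Sx
  | inr Sx, inl i => i \in Sx
  | _, _ => false
  end.

Theorem mainTheorem4 (d : nat) (hd : (1 <= d)%N) :
  exists (V : finType) (e : rel V),
    symmetric e /\ irreflexive e /\ ~ sphere_graph d e.
Proof.
exists (VV d), (@ee d); split; first by move=> [i|Sx] [j|Sx'].
split; first by move=> [i|Sx].
move=> [f [Hf [_ He]]].
have : forall v : VV d, exists p : point d * RR,
   (exists i, p.1 i <> 0) /\ (exists x, dotp x x < 1 /\ dotp p.1 x = p.2) /\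
   (forall x, f v x <-> in_disk x /\ dotp p.1 x = p.2).
  move=> v; have [a [b [h1 [h2 h3]]]] := Hf v; by exists (a, b).
case/fin_all_exists => g hg.
pose pa v := (g v).1; pose pb v := (g v).2.
have edge : forall (i : 'I_(kk d)) (Sx : {set 'I_(kk d)}), (i \in Sx) <-> Pf (pa (inl i)) (pb (inl i)) (pa (inr Sx)) (pb (inr Sx)) <= 0.
  move=> i Sx.
  have [_ [_ h3i]] := hg (inl i).
  have [h1S [h2S h3S]] := hg (inr Sx).
  rewrite -(inter_iff _ _ h1S h2S).
  have -> : (i \in Sx) = ee (inl i) (inr Sx) by [].
  rewrite (He (inl i) (inr Sx)) //.
  split.
  + move=> [x [/h3i [hx1 hx2] /h3S [_ hx3]]]; by exists x.
  + move=> [x [hx1 [hx2 hx3]]]; exists x; split; [apply/h3i | apply/h3S]; by [].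
pose Phi : 'M[RR]_(kk d, #|{: TT d}|) :=
  \matrix_(i, j) phi (pa (inl i)) (pb (inl i)) (enum_val j).
have kn0 : kermx Phi != 0.
  rewrite -mxrank_eq0 mxrank_ker.
  have := rank_leq_col Phi; rewrite /kk => h.
  rewrite subn_eq0 -ltnNge; exact: leq_ltn_trans h (ltnSn _).
have : ~~ [forall r, [forall j, kermx Phi r j == 0]].
  apply: contra kn0 => /forallP h; apply/eqP/matrixP => r j.
  by move/forallP: (h r) => /(_ j) /eqP ->; rewrite mxE.
rewrite negb_forall => /existsP [r]; rewrite negb_forall => /existsP [j0 hrj].
pose lam := row r (kermx Phi).
have hlam : lam *m Phi = 0 by rewrite -row_mul mulmx_ker row0.
have [mu [hmu hj0]] : exists mu : 'rV_(kk d), mu *m Phi = 0 /\ 0 < mu 0 j0.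
  have : lam 0 j0 != 0 by rewrite mxE.
  rewrite neq_lt => /orP [hn|hp].
  - exists (- lam); split; first by rewrite mulNmx hlam oppr0.
    by rewrite mxE oppr_gt0.
  - by exists lam.
pose Sx := [set i | mu 0 i <= 0].
pose w (j : 'I_#|{: TT d}|) := psi (pa (inr Sx)) (pb (inr Sx)) (enum_val j).
pose P (i : 'I_(kk d)) := Pf (pa (inl i)) (pb (inl i)) (pa (inr Sx)) (pb (inr Sx)).
have hP : forall i, P i = \sum_j Phi i j * w j.
  move=> i; rewrite /P Pf_lin /w.
  rewrite (big_enum_val (A := predT)) /=.
  by apply: eq_bigr => j _; rewrite mxE.
have hsum : \sum_i mu 0 i * P i = 0.
  under eq_bigr => i _ do rewrite hP mulr_sumr.
  rewrite exchange_big /= big1 // => j _.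
  have : (mu *m Phi) 0 j = 0 by rewrite hmu mxE.
  rewrite mxE => h0.
  transitivity ((\sum_i mu 0 i * Phi i j) * w j); last by rewrite h0 mul0r.
  by rewrite mulr_suml; apply: eq_bigr => i _; rewrite mulrA.
have hterm : forall i, 0 <= mu 0 i * P i /\ (0 < mu 0 i -> 0 < mu 0 i * P i).
  move=> i; case: (leP (mu 0 i) 0) => hm.
  - have : i \in Sx by rewrite inE.
    move/edge => hPi; split; [exact: mulr_le0 | by []].
  - have : i \notin Sx by rewrite inE -ltNge.
    move=> hn; have hPi : 0 < P i.
      rewrite ltNge; apply/negP => h; move/negP: hn; apply; exact/edge.
    split; [exact: ltW (mulr_gt0 hm hPi) | by move=> _; exact: mulr_gt0].
have : 0 < \sum_i mu 0 i * P i.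
  rewrite (bigD1 j0) //=.
  have h1 := (proj2 (hterm j0)) hj0.
  have h2 : 0 <= \sum_(i | i != j0) mu 0 i * P i by apply: sumr_ge0 => i _; exact: (proj1 (hterm i)).
  lra.
by rewrite hsum ltxx.
Qed.
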